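(* Let $\Omega=\{a,b,c,d\}$ and $\Sigma=2^\Omega$. Let $\mu_1,\mu_2,\mu_3,\mu_4$ be the probability measures on $\Sigma$ determined by $\mu_1(a)=\mu_1(b)=\mu_1(c)=\mu_1(d)=\tfrac14$; $\mu_2(a)=0,\ \mu_2(b)=\tfrac18,\ \mu_2(c)=\tfrac38,\ \mu_2(d)=\tfrac12$; $\mu_3(a)=\tfrac18,\ \mu_3(b)=\tfrac38,\ \mu_3(c)=0,\ \mu_3(d)=\tfrac12$; $\mu_4(a)=\tfrac38,\ \mu_4(b)=0,\ \mu_4(c)=\tfrac18,\ \mu_4(d)=\tfrac12$. Let $\mathcal{P}=\{\mu_1,\mu_2,\mu_3,\mu_4\}$ and $\mathcal{P}^*(X)=\max_{i}\mu_i(X)$. For $\epsilon>0$ define $\upsilon_\epsilon:\Sigma\to[0,1]$ by $\upsilon_\epsilon(\{a,b,c\})=\mathcal{P}^*(\{a,b,c\})+\epsilon$ and $\upsilon_\epsilon(X)=\mathcal{P}^*(X)$ for $X\ne\{a,b,c\}$. Then for every $0<\epsilon<\tfrac18$: (i) $\upsilon_\epsilon$ satisfies property (6), i.e. for all disjoint $A,B\subseteq\Omega$, $\upsilon_\epsilon(A)+(1-\upsilon_\epsilon(\Omega\setminus B))\le \upsilon_\epsilon(A\cup B)\le \upsilon_\epsilon(A)+\upsilon_\epsilon(B)$; and (ii) there is no set $\mathcal{P}'$ of probability measures on $\Sigma$ such that $\upsilon_\epsilon(X)=\sup\{\mu(X):\mu\in\mathcal{P}'\}$ for all $X\in\Si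gma$.
   Context: Probability measures are finitely additive functions $\mu:\Sigma\to[0,1]$ with $\mu(\emptyset)=0$, $\mu(\Omega)=1$. *)

(* Defs.v *)
From HB Require Import structures.
From mathcomp Require Import all_boot all_order all_algebra.
From mathcomp Require Import reals.
Set Implicit Arguments. Unset Strict Implicit. Unset Printing Implicit Defensive.
Import Order.TTheory GRing.Theory Num.Theory.
Local Open Scope ring_scope.

Definition Omega := 'I_4.
Definition oa : Omega := @Ordinal 4 0 isT.
Definition ob : Omega := @Ordinal 4 1 isT.
Definition oc : Omega := @Ordinal 4 2 isT.
Definition od : Omega := @Ordinal 4 3 isT.

Definition is_prob_measure (R : realType) (mu : {set Omega} -> R) : Prop :=
  (forall X, 0 <= mu X <= 1) /\ mu set0 = 0 /\ mu setT = 1 /\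
  (forall A B : {set Omega}, [disjoint A & B] -> mu (A :|: B) = mu A + mu B).

Definition pmeas (R : realType) (wa wb wc wd : R) (X : {set Omega}) : R :=
  (if oa \in X then wa else 0) + (if ob \in X then wb else 0) +
  (if oc \in X then wc else 0) + (if od \in X then wd else 0).

Definition mu1 (R : realType) := pmeas (1/4 : R) (1/4) (1/4) (1/4).
Definition mu2 (R : realType) := pmeas (0 : R) (1/8) (3/8) (1/2).
Definition mu3 (R : realType) := pmeas (1/8 : R) (3/8) 0 (1/2).
Definition mu4 (R : realType) := pmeas (3/8 : R) 0 (1/8) (1/2).

Definition Pstar (R : realType) (X : {set Omega}) : R :=
  Num.max (Num.max (mu1 R X) (mu2 R X)) (Num.max (mu3 R X) (mu4 R X)).

Definition abc : {set Omega} := [set oa; ob; oc].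

Definition upsilon (R : realType) (eps : R) (X : {set Omega}) : R :=
  if X == abc then Pstar R X + eps else Pstar R X.

Definition property6 (R : realType) (u : {set Omega} -> R) : Prop :=
  forall A B : {set Omega}, [disjoint A & B] ->
    u A + (1 - u (~: B)) <= u (A :|: B) /\ u (A :|: B) <= u A + u B.

Definition is_sup (R : realType) (S : R -> Prop) (s : R) : Prop :=
  (forall y, S y -> y <= s) /\ (forall z, (forall y, S y -> y <= z) -> s <= z).

Definition upper_env_of (R : realType) (P' : ({set Omega} -> R) -> Prop)
    (u : {set Omega} -> R) : Prop :=
  forall X, is_sup (fun y => exists2 mu, P' mu & y = mu X) (u X).

(* Main.v *)
Require Import Defs.
From HB Require Import structures.
From mathcomp Require Import all_boot all_order all_algebra.
From mathcomp Require Import reals.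
From mathcomp Require Import lra.
Import Order.TTheory GRing.Theory Num.Theory.
Local Open Scope ring_scope.

Definition tblN (xa xb xc xd : bool) : nat :=
  nth 0%N [:: 0; 3; 3; 4; 3; 4; 4; 6; 4; 7; 7; 8; 7; 8; 8; 8]%N
    (xa + 2 * xb + 4 * xc + 8 * xd)%N.

Definition tblK (xa xb xc xd : bool) : nat :=
  if [&& xa, xb, xc & ~~ xd] then 1%N else 0%N.

Definition tbl {R : realType} (eps : R) (xa xb xc xd : bool) : R :=
  (tblN xa xb xc xd)%:R / 8 + (tblK xa xb xc xd)%:R * eps.

Lemma abcE (X : {set Omega}) :
  (X == abc) = [&& oa \in X, ob \in X, oc \in X & od \notin X].
Proof.
apply/eqP/and4P.
- by move=> ->; rewrite !inE.
- case=> ha hb hc hd; apply/setP=> x; rewrite !inE.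
  case: x => [[|[|[|[|n]]]] Hx] //=.
  + by rewrite (_ : Ordinal Hx = oa) ?ha //; apply: val_inj.
  + by rewrite (_ : Ordinal Hx = ob) ?hb //; apply: val_inj.
  + by rewrite (_ : Ordinal Hx = oc) ?hc //; apply: val_inj.
  + by rewrite (_ : Ordinal Hx = od); [exact/negbTE | apply: val_inj].
Qed.

Lemma upsE (R : realType) (eps : R) X :
  upsilon eps X = tbl eps (oa \in X) (ob \in X) (oc \in X) (od \in X).
Proof.
rewrite /upsilon abcE /tbl /tblK /Pstar /mu1 /mu2 /mu3 /mu4 /pmeas.
case: (oa \in X); case: (ob \in X); case: (oc \in X); case: (od \in X);
  rewrite /tblN /=;
  rewrite /Order.max; repeat case: ifP; move=> *; lra.
Qed.

Definition cond1 (nA nB nU kA kB kU : nat) : bool :=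
  ((nA + 8 < nB + nU)%N && (kA <= kU + kB + 1)%N) ||
  ((nA + 8 <= nB + nU)%N && (kA <= kU + kB)%N).
Definition cond2 (nA nB nU kA kB kU : nat) : bool :=
  ((nU < nA + nB)%N && (kU <= kA + kB + 1)%N) ||
  ((nU <= nA + nB)%N && (kU <= kA + kB)%N).

Lemma ineq1 (R : realType) (e : R) nA nB nU kA kB kU :
  0 < e -> e < 1/8 -> cond1 nA nB nU kA kB kU ->
  nA%:R / 8 + kA%:R * e + (1 - (nB%:R / 8 + kB%:R * e)) <= nU%:R / 8 + kU%:R * e.
Proof.
move=> e0 e1 /orP [/andP [h1 h2] | /andP [h1 h2]].
- have h1' : (nA + 8).+1%:R <= (nB + nU)%:R :> R by rewrite ler_nat.
  have h2' : kA%:R * e <= (kU + kB + 1)%:R * e :> R by rewrite ler_pM2r // ler_nat.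
  move: h1' h2'; rewrite -addn1 !natrD !mulrDl mul1r.
  move: (kA%:R * e) (kB%:R * e) (kU%:R * e) (nA%:R : R) (nB%:R : R) (nU%:R : R).
  move=> *; lra.
- have h1' : (nA + 8)%:R <= (nB + nU)%:R :> R by rewrite ler_nat.
  have h2' : kA%:R * e <= (kU + kB)%:R * e :> R by rewrite ler_pM2r // ler_nat.
  move: h1' h2'; rewrite !natrD !mulrDl.
  move: (kA%:R * e) (kB%:R * e) (kU%:R * e) (nA%:R : R) (nB%:R : R) (nU%:R : R).
  move=> *; lra.
Qed.

Lemma ineq2 (R : realType) (e : R) nA nB nU kA kB kU :
  0 < e -> e < 1/8 -> cond2 nA nB nU kA kB kU ->
  nU%:R / 8 + kU%:R * e <= nA%:R / 8 + kA%:R * e + (nB%:R / 8 + kB%:R * e).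
Proof.
move=> e0 e1 /orP [/andP [h1 h2] | /andP [h1 h2]].
- have h1' : nU.+1%:R <= (nA + nB)%:R :> R by rewrite ler_nat.
  have h2' : kU%:R * e <= (kA + kB + 1)%:R * e :> R by rewrite ler_pM2r // ler_nat.
  move: h1' h2'; rewrite -addn1 !natrD !mulrDl mul1r.
  move: (kA%:R * e) (kB%:R * e) (kU%:R * e) (nA%:R : R) (nB%:R : R) (nU%:R : R).
  move=> *; lra.
- have h1' : nU%:R <= (nA + nB)%:R :> R by rewrite ler_nat.
  have h2' : kU%:R * e <= (kA + kB)%:R * e :> R by rewrite ler_pM2r // ler_nat.
  move: h1' h2'; rewrite !natrD !mulrDl.
  move: (kA%:R * e) (kB%:R * e) (kU%:R * e) (nA%:R : R) (nB%:R : R) (nU%:R : R).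
  move=> *; lra.
Qed.

Lemma bits_ok (a1 a2 b1 b2 c1 c2 d1 d2 : bool) :
  (a1 -> a2 = false) -> (b1 -> b2 = false) -> (c1 -> c2 = false) -> (d1 -> d2 = false) ->
  cond1 (tblN a1 b1 c1 d1) (tblN (~~ a2) (~~ b2) (~~ c2) (~~ d2))
        (tblN (a1 || a2) (b1 || b2) (c1 || c2) (d1 || d2))
        (tblK a1 b1 c1 d1) (tblK (~~ a2) (~~ b2) (~~ c2) (~~ d2))
        (tblK (a1 || a2) (b1 || b2) (c1 || c2) (d1 || d2)) &&
  cond2 (tblN a1 b1 c1 d1) (tblN a2 b2 c2 d2)
        (tblN (a1 || a2) (b1 || b2) (c1 || c2) (d1 || d2))
        (tblK a1 b1 c1 d1) (tblK a2 b2 c2 d2)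
        (tblK (a1 || a2) (b1 || b2) (c1 || c2) (d1 || d2)).
Proof.
case: a1; case: a2; case: b1; case: b2; case: c1; case: c2; case: d1; case: d2;
  move=> Ha Hb Hc Hd;
  try (by have := Ha isT); try (by have := Hb isT);
  try (by have := Hc isT); try (by have := Hd isT); by [].
Qed.

Lemma u_ab (R : realType) (eps : R) : upsilon eps [set oa; ob] = 1/2.
Proof. rewrite upsE !inE /tbl /tblN /tblK /=; lra. Qed.
Lemma u_ac (R : realType) (eps : R) : upsilon eps [set oa; oc] = 1/2.
Proof. rewrite upsE !inE /tbl /tblN /tblK /=; lra. Qed.
Lemma u_bc (R : realType) (eps : R) : upsilon eps [set ob; oc] = 1/2.
Proof. rewrite upsE !inE /tbl /tblN /tblK /=; lra. Qed.
Lemma u_abc (R : realType) (eps : R) : upsilon eps abc = 3/4 + eps.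
Proof. rewrite upsE !inE /tbl /tblN /tblK /=; lra. Qed.

Theorem proposition2 (R : realType) (eps : R) :
  0 < eps -> eps < 1/8 ->
  property6 (upsilon eps) /\
  ~ (exists P' : ({set Omega} -> R) -> Prop,
        (forall mu, P' mu -> is_prob_measure mu) /\ upper_env_of P' (upsilon eps)).
Proof.
move=> e0 e1; split.
  move=> A B dAB; rewrite !upsE !inE.
  have Ha := @disjointFr _ _ _ oa dAB; have Hb := @disjointFr _ _ _ ob dAB.
  have Hc := @disjointFr _ _ _ oc dAB; have Hd := @disjointFr _ _ _ od dAB.
  have /andP [C1 C2] := bits_ok _ _ _ _ _ _ _ _ Ha Hb Hc Hd.
  split; rewrite /tbl; [exact: ineq1 | exact: ineq2].
case=> P' [Hp Hu].
have le_u mu X : P' mu -> mu X <= upsilon eps X.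
  by move=> Pmu; apply: (proj1 (Hu X)); exists mu.
have : ~~ (upsilon eps abc <= 3/4).
  rewrite u_abc; apply/negP => h; lra.
apply/negP/negPn; apply: (proj2 (Hu abc)) => y [mu Pmu ->].
case: leP => // hgt.
have [_ [_ [_ Hadd]]] := Hp mu Pmu.
have d12 : [disjoint [set oa] & [set ob]] by rewrite disjoints1 !inE.
have d13 : [disjoint [set oa] & [set oc]] by rewrite disjoints1 !inE.
have d23 : [disjoint [set ob] & [set oc]] by rewrite disjoints1 !inE.
have d1_23 : [disjoint [set oa; ob] & [set oc]] by rewrite disjoint_sym disjoints1 !inE.
have Eab := Hadd _ _ d12; have Eac := Hadd _ _ d13; have Ebc := Hadd _ _ d23.
have Eabc := Hadd _ _ d1_23.
have Uab := le_u mu [set oa; ob] Pmu.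
have Uac := le_u mu [set oa; oc] Pmu.
have Ubc := le_u mu [set ob; oc] Pmu.
move: Uab Uac Ubc; rewrite u_ab u_ac u_bc.
rewrite /abc Eabc [mu [set oa; ob]]Eab in hgt.
rewrite [mu [set oa; ob]]Eab [mu [set oa; oc]]Eac [mu [set ob; oc]]Ebc.
move: hgt; move: (mu [set oa]) (mu [set ob]) (mu [set oc]) => xa xb xc.
move=> h1 h2 h3 h4; exfalso; lra.
Qed.
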